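(* Let $n\ge 3$ be an integer. (1) If $n=3$ or $n=4$, then $l_0^{(n-1)^3}(n^3)>\frac{(n!)^{2n}}{n^{n^2}}$. (2) If $n\ge 5$, then $l_0^{(n-1)^3}(n^3)<\frac{(n!)^{2n}}{n^{n^2}}$.
   Context: For a positive integer $d$ and integer $m$, define $$u_0^d(m)=\binom{m-\lfloor \frac{d}{2}\rfloor -1}{\lfloor \frac{d-1}{2}\rfloor}+\binom{m-\lfloor \frac{d-1}{2}\rfloor -1}{\lfloor \frac{d}{2}\rfloor},$$ where $\binom{a}{b}=0$ when $a<b$; and for a number $x$, $l_0^d(x)=k$ if and only if $k$ is the integer with $u_0^d(k-1)<x\le u_0^d(k)$. *)

(* Defs.v *)
From mathcomp Require Import all_boot all_order all_algebra.
Import GRing.Theory Num.Theory.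
Local Open Scope ring_scope.

Definition binz (a : int) (b : nat) : nat :=
  match a with
  | Posz a' => 'C(a', b)
  | Negz _ => 0%N
  end.

(* u_0^d(m) = C(m - floor(d/2) - 1, floor((d-1)/2)) + C(m - floor((d-1)/2) - 1, floor(d/2)),
   for d a positive integer (so floor((d-1)/2) = (d.-1)./2). *)
Definition u0 (d : nat) (m : int) : nat :=
  (binz (m - (d./2)%:Z - 1) (d.-1)./2 + binz (m - ((d.-1)./2)%:Z - 1) d./2)%N.

Definition is_l0 (d : nat) (x : rat) (k : int) : Prop :=
  ((u0 d (k - 1))%:R < x) /\ (x <= (u0 d k)%:R).

(* Main.v *)
Require Import Defs.
From mathcomp Require Import all_boot all_order all_algebra.
From mathcomp Require Import zify.
Import Order.TTheory GRing.Theory Num.Theory.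
Lemma bern n m : (n ^ m * (n + 1) + m * (n + 1) ^ m >= (n + 1) ^ m.+1)%N.
Proof.
elim: m => [|m IH]; first by rewrite !expn0 expn1; lia.
rewrite !expnS. move: IH; rewrite expnS.
move: (n ^ m) (((n + 1) ^ m)) => A B IH.
nia.
Qed.

Lemma bern2 n : ((n + 1) ^ n <= n ^ n * (n + 1))%N.
Proof.
have := bern n n; rewrite expnS. move: (n ^ n) (((n + 1) ^ n)) => A B H. nia.
Qed.

Lemma fact4 n : (5 <= n)%N -> (4 * n ^ n <= n`! ^ 2)%N.
Proof.
elim: n => // n IH; rewrite leq_eqVlt => /orP [/eqP <- | h]; first by [].
have {}IH := IH h.
rewrite factS expnMn expnS.
have := bern2 n. rewrite addn1.
move: (n`! ^ 2) (n ^ n) ((n.+1) ^ n) IH => F A B IH H. nia.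
Qed.

Lemma cube4 n : (5 <= n)%N -> (n ^ 3 < 4 ^ n)%N.
Proof.
elim: n => // n IH; rewrite leq_eqVlt => /orP [/eqP <- | h]; first by [].
have {}IH := IH h.
have : (n.+1 ^ 3 <= 4 * n ^ 3)%N.
  rewrite !expnS expn0 !muln1.
  have h3 : (n.+1 * n.+1 <= 2 * (n * n))%N by nia.
  have h4 : (n.+1 <= 2 * n)%N by nia.
  have := leq_mul h3 h4. nia.
rewrite [(4 ^ n.+1)%N]expnS. move: (4 ^ n) (n ^ 3) (n.+1 ^ 3) IH => P X Y IH H. lia.
Qed.

Lemma main5 n : (5 <= n)%N -> (((n - 1) ^ 3 + 2) * n ^ (n ^ 2) < n`! ^ (2 * n))%N.
Proof.
move=> h.
have h1 : ((n - 1) ^ 3 + 2 <= n ^ 3)%N.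
  have e : n = (n - 1).+1 by lia.
  move: (n - 1)%N e => m e. have hm : (1 <= m)%N by lia. rewrite e !expnS expn0 !muln1. nia.
have h2 := @cube4 n h.
have h3 : (4 ^ n * n ^ (n ^ 2) <= n`! ^ (2 * n))%N.
  rewrite -mulnn [in X in (X <= _)%N]expnM -expnMn [in X in (_ <= X)%N]expnM leq_exp2r; last lia.
  exact: fact4.
apply: leq_trans h3. rewrite ltn_pmul2r ?expn_gt0; last lia.
exact: leq_ltn_trans h1 h2.
Qed.

Local Open Scope ring_scope.


Lemma halves e : ((e.+1)./2 + e./2 = e.+1 - 1)%N /\ (e./2 <= (e.+1)./2 <= e./2 + 1)%N.
Proof.
have h1 := odd_double_half e.
have h2 : (e.+1)./2 = (odd e + e./2)%N by rewrite -uphalf_half.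
rewrite -muln2 in h1; rewrite h2; move: h1; case: (odd e) => /= h1; lia.
Qed.

Lemma binzE (m c b : nat) : (c < m)%N -> binz (m%:Z - c%:Z - 1) b = 'C(m - c.+1, b).
Proof.
move=> h; have -> : m%:Z - c%:Z - 1 = (m - c.+1)%N%:Z by lia.
by [].
Qed.

Lemma binz_mono (x y : int) b : x <= y -> (binz x b <= binz y b)%N.
Proof.
case: x => [x|x] //; case: y => [y|y] // h.
by apply: leq_bin2l; move: h; rewrite lez_nat.
Qed.

Lemma u0_mono d (x y : int) : x <= y -> (u0 d x <= u0 d y)%N.
Proof.
move=> h; rewrite /u0; apply: leq_add; apply: binz_mono; lia.
Qed.

Lemma bin2S m : ('C(m.+2, m) * 2 = (m + 2) * (m + 1))%N.
Proof.
elim: m => [|m IH]; first by [].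
rewrite binS binSn mulnDl IH; lia.
Qed.

Lemma u0_d1 d : (0 < d)%N -> u0 d (d.+1)%:Z = d.+1.
Proof.
case: d => // e _; have [h1 h2] := halves e.
rewrite /u0 !binzE; try lia.
have -> : (e.+2 - (e.+1)./2.+1 = (e./2).+1)%N by lia.
have -> : (e.+2 - (e.+1).-1./2.+1 = ((e.+1)./2).+1)%N by rewrite /=; lia.
rewrite /= !binSn; lia.
Qed.

Lemma u0_d2 d : (0 < d)%N -> (u0 d (d.+2)%:Z * 2 = (d.-1./2 + 2) * (d.-1./2 + 1) + (d./2 + 2) * (d./2 + 1))%N.
Proof.
case: d => // e _; have [h1 h2] := halves e.
rewrite /u0 !binzE; try lia.
have -> : (e.+3 - (e.+1)./2.+1 = (e./2).+2)%N by lia.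
have -> : (e.+3 - (e.+1).-1./2.+1 = ((e.+1)./2).+2)%N by rewrite /=; lia.
rewrite /= mulnDl !bin2S; lia.
Qed.

Lemma l0_uniq d x k k' : is_l0 d x k -> is_l0 d x k' -> k = k'.
Proof.
move=> [h1 h2] [h3 h4].
case: (ltgtP k k') => // hk.
- have hk2 : k <= k' - 1 by lia.
  have := @u0_mono d _ _ hk2; rewrite -(ler_nat rat) => H. have := le_lt_trans h2 (le_lt_trans H h3).
  by rewrite ltxx.
- have hk2 : k' <= k - 1 by lia.
  have := @u0_mono d _ _ hk2; rewrite -(ler_nat rat) => H. have := le_lt_trans h4 (le_lt_trans H h1).
  by rewrite ltxx.
Qed.

Lemma d_gap n : (2 <= n)%N -> (((n - 1) ^ 3).+2 <= n ^ 3)%N.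
Proof.
move=> h. have e : n = (n - 1).+1 by lia.
move: (n - 1)%N e => m e. have hm : (1 <= m)%N by lia. rewrite e !expnS expn0 !muln1. nia.
Qed.

Lemma big4 n : (4 <= n)%N -> (n ^ 3 <= u0 ((n - 1) ^ 3) (((n - 1) ^ 3).+2)%:Z)%N.
Proof.
move=> h.
have hd : (27 <= (n - 1) ^ 3)%N.
  have e : n = (n - 1).+1 by lia.
  move: (n - 1)%N e => m e. have hm : (3 <= m)%N by lia. rewrite !expnS expn0 !muln1. nia.
have h3 : (n ^ 3 <= 3 * (n - 1) ^ 3)%N.
  have e : n = (n - 1).+1 by lia.
  move: (n - 1)%N e hd => m e hd. have hm : (3 <= m)%N by lia. rewrite e !expnS expn0 !muln1. nia.
have hd0 : (0 < (n - 1) ^ 3)%N by lia.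
have := u0_d2 _ hd0.
case: ((n - 1) ^ 3)%N hd h3 => // e hd h3.
have [h1 h2] := halves e. rewrite /= in h1 h2 * => H.
move: (u0 e.+1 (e.+3)%:Z) (uphalf e) (e./2) (n ^ 3)%N h1 h2 H h3 => U a b N h1 h2 H h3.
have hb : (13 <= b)%N by lia.
have : (15 * (b + 1) <= (b + 2) * (b + 1))%N by nia.
nia.
Qed.

Lemma l0_ge4 n : (4 <= n)%N -> is_l0 ((n - 1) ^ 3)%N (n ^ 3)%N%:R (((n - 1) ^ 3).+2)%:Z.
Proof.
move=> h; split.
  have -> : (((n - 1) ^ 3).+2)%:Z - 1 = (((n - 1) ^ 3).+1)%:Z by lia.
  rewrite u0_d1 ?ltr_nat; last by rewrite expn_gt0; lia.
  have h2 : (2 <= n)%N by lia.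
  exact: d_gap _ h2.
by rewrite ler_nat; apply: big4.
Qed.

Lemma l0_3 : is_l0 ((3 - 1) ^ 3)%N (3 ^ 3)%N%:R 11.
Proof. by split; rewrite ?ltr_nat ?ler_nat; vm_compute. Qed.

Theorem proposition8 (n : nat) : (3 <= n)%N ->
  (exists k : int, is_l0 ((n - 1) ^ 3)%N (n ^ 3)%N%:R k) /\
  (forall k : int, is_l0 ((n - 1) ^ 3)%N (n ^ 3)%N%:R k ->
     ((n = 3%N \/ n = 4%N) ->
        ((n`! ^ (2 * n))%N%:R / (n ^ (n ^ 2))%N%:R : rat) < k%:~R) /\
     ((5 <= n)%N ->
        (k%:~R : rat) < (n`! ^ (2 * n))%N%:R / (n ^ (n ^ 2))%N%:R)).
Proof.
move=> h3.
have hpos : (0 : rat) < (n ^ (n ^ 2))%N%:R by rewrite ltr0n expn_gt0; lia.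
case: (ltnP n 4) => h4.
  have -> : n = 3%N by lia.
  split; first by exists 11; exact: l0_3.
  move=> k hk; have -> := l0_uniq _ _ _ _ hk l0_3.
  split; last by move=> h5; exfalso; move: h5; apply/negP.
  move=> _.
  rewrite ltr_pdivrMr; last by rewrite ltr0n expn_gt0.
  have -> : (11%:~R : rat) = 11%:R by [].
  rewrite -natrM ltr_nat.
  have -> : (3`! ^ (2 * 3) = 3 ^ 6 * 2 ^ 6)%N.
    have -> : (3`! = 3 * 2)%N by [].
    by rewrite expnMn.
  have -> : (3 ^ 3 ^ 2 = 3 ^ 6 * 3 ^ 3)%N by rewrite -expnD.
  rewrite [(11 * _)%N]mulnC -mulnA ltn_pmul2l; last by rewrite expn_gt0.
  by vm_compute.
split; first by eexists; exact: l0_ge4 _ h4.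
move=> k hk; have -> := l0_uniq _ _ _ _ hk (l0_ge4 _ h4).
have -> : ((((n - 1) ^ 3).+2)%:Z%:~R : rat) = (((n - 1) ^ 3) + 2)%N%:R by rewrite addn2.
split.
  move=> [e|e]; first lia.
  subst n.
  rewrite ltr_pdivrMr; last by rewrite ltr0n expn_gt0.
  rewrite -natrM ltr_nat.
  have -> : (4`! ^ (2 * 4) = 3 ^ 8 * 2 ^ 24)%N.
    have -> : (4`! = 3 * 2 ^ 3)%N by [].
    by rewrite expnMn -expnM.
  have -> : (4 ^ 4 ^ 2 = 2 ^ 8 * 2 ^ 24)%N.
    rewrite -expnD. change (4 ^ 4 ^ 2)%N with ((2 ^ 2) ^ 16)%N. rewrite -expnM. by [].
  rewrite mulnA ltn_pmul2r; last by rewrite expn_gt0.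
  by vm_compute.
move=> h5.
rewrite ltr_pdivlMr; last exact: hpos.
rewrite -natrM ltr_nat.
exact: main5.
Qed.
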